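(* For every $q>0$, every $n\in\mathbb{N}$ and all $k,\ell\in\mathbb{Z}_+^n$, $$\frac{[|k+\ell|]_q!}{[k+\ell]_q!}\ \ge\ \frac{[|k|]_q!}{[k]_q!}\cdot\frac{[|\ell|]_q!}{[\ell]_q!}\cdot q^{\sum_{i<j}k_i\ell_j}.$$
   Context: For $q\in\mathbb{C}\setminus\{0\}$ and $m\in\mathbb{N}$: $[m]_q=1+q+\dots+q^{m-1}$, $[m]_q!=[1]_q[2]_q\cdots[m]_q$, $[0]_q!=1$. For $k=(k_1,\dots,k_n)\in\mathbb{Z}_+^n$: $[k]_q!=[k_1]_q!\cdots[k_n]_q!$ and $|k|=k_1+\dots+k_n$. *)

(* Defs.v *)
From HB Require Import structures.
From mathcomp Require Import all_boot all_order all_algebra.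
Set Implicit Arguments. Unset Strict Implicit. Unset Printing Implicit Defensive.
Import Order.TTheory GRing.Theory Num.Theory.
Local Open Scope ring_scope.

Definition qint {R : pzRingType} (q : R) (m : nat) : R := \sum_(i < m) q ^+ i.

Definition qfact {R : pzRingType} (q : R) (m : nat) : R :=
  \prod_(1 <= i < m.+1) qint q i.

(* multi-index versions: k : 'I_n -> nat represents k in Z_+^n *)
Definition qfactv {R : pzRingType} (q : R) (n : nat) (k : 'I_n -> nat) : R :=
  \prod_(i < n) qfact q (k i).

Definition absv (n : nat) (k : 'I_n -> nat) : nat := (\sum_(i < n) k i)%N.

(* Main.v *)
Require Import Defs.
From HB Require Import structures.
From mathcomp Require Import all_boot all_order all_algebra.
From mathcomp Require Import ring lra zify.
Set Implicit Arguments. Unset Strict Implicit.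
Import Order.TTheory GRing.Theory Num.Theory.
Local Open Scope ring_scope.

Lemma qintD (R : realFieldType) (q : R) m n : qint q (m+n) = qint q m + q^+m * qint q n.
Proof.
elim: n => [|n IH]; first by rewrite addn0 /qint big_ord0 mulr0 addr0.
rewrite addnS /qint big_ord_recr /= -/(qint q (m+n)) IH big_ord_recr /= -/(qint q n).
by rewrite mulrDr exprD addrA.
Qed.

Lemma qfactS (R : realFieldType) (q : R) m : qfact q m.+1 = qfact q m * qint q m.+1.
Proof. by rewrite /qfact big_nat_recr. Qed.

Lemma qfact0 (R : realFieldType) (q : R) : qfact q 0 = 1.
Proof. by rewrite /qfact big_geq. Qed.

Lemma qint_ge0 (R : realFieldType) (q : R) (m : nat) : 0 < q -> 0 <= qint q m.
Proof. move=> hq; apply: sumr_ge0 => i _; exact: exprn_ge0 (ltW hq). Qed.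

Lemma qint_gt0 (R : realFieldType) (q : R) m : 0 < q -> 0 < qint q m.+1.
Proof.
move=> hq; rewrite /qint big_ord_recr /= -/(qint q m).
have := qint_ge0 m hq; have := exprn_gt0 m hq; lra.
Qed.

Lemma qfact_gt0 (R : realFieldType) (q : R) m : 0 < q -> 0 < qfact q m.
Proof.
move=> hq; elim: m => [|m IH]; first by rewrite qfact0.
by rewrite qfactS mulr_gt0 // qint_gt0.
Qed.

Definition B (R : realFieldType) (q : R) m r := qfact q (m+r) / (qfact q m * qfact q r).

Lemma B_gt0 (R : realFieldType) (q : R) m r : 0 < q -> 0 < B q m r.
Proof. by move=> hq; rewrite /B divr_gt0 ?mulr_gt0 ?qfact_gt0. Qed.

Lemma B_m0 (R : realFieldType) (q : R) m : 0 < q -> B q m 0 = 1.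
Proof.
move=> hq; rewrite /B addn0 qfact0 mulr1 divff //.
by apply: lt0r_neq0; exact: qfact_gt0.
Qed.

Lemma B_0r (R : realFieldType) (q : R) r : 0 < q -> B q 0 r = 1.
Proof.
move=> hq; rewrite /B add0n qfact0 mul1r divff //.
by apply: lt0r_neq0; exact: qfact_gt0.
Qed.

Lemma B_pascal (R : realFieldType) (q : R) m r : 0 < q ->
  B q m.+1 r.+1 = q^+m.+1 * B q m.+1 r + B q m r.+1.
Proof.
move=> hq; rewrite /B.
have e1 : (m.+1 + r.+1 = (m + r.+1).+1)%N by lia.
have e2 : (m.+1 + r = m + r.+1)%N by lia.
have e3 : qint q (m + r.+1).+1 = qint q m.+1 + q^+m.+1 * qint q r.+1.
  by rewrite -qintD; congr qint; lia.
rewrite e1 e2 qfactS e3 (qfactS q m) (qfactS q r).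
have h1 := qfact_gt0 m hq; have h2 := qfact_gt0 r hq.
have h3 := qint_gt0 m hq; have h4 := qint_gt0 r hq.
field; by rewrite !lt0r_neq0.
Qed.

Lemma B_mono1 (R : realFieldType) (q : R) m r : 0 < q -> B q m r <= B q m.+1 r.
Proof.
move=> hq; case: r => [|r]; first by rewrite !B_m0.
rewrite B_pascal //; have := B_gt0 m.+1 r hq; have := exprn_gt0 m.+1 hq.
move=> h1 h2; have := mulr_gt0 h1 h2; lra.
Qed.

Lemma B_mono (R : realFieldType) (q : R) m c r : 0 < q -> B q m r <= B q (m + c) r.
Proof.
move=> hq; elim: c => [|c IH]; first by rewrite addn0.
by apply: le_trans IH _; rewrite addnS B_mono1.
Qed.

Lemma B_shift (R : realFieldType) (q : R) m r : 0 < q -> q^+m * B q m r <= B q m r.+1.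
Proof.
move=> hq; case: m => [|m]; first by rewrite !B_0r // expr0 mul1r.
rewrite B_pascal //; have := B_gt0 m r.+1 hq; lra.
Qed.

Lemma B_shiftn (R : realFieldType) (q : R) m r d : 0 < q ->
  q^+(m*d) * B q m r <= B q m (r + d).
Proof.
move=> hq; elim: d => [|d IH]; first by rewrite muln0 expr0 mul1r addn0.
rewrite addnS; apply: le_trans (B_shift m (r+d) hq); rewrite mulnS exprD -mulrA.
by rewrite ler_wpM2l // exprn_ge0 // ltW.
Qed.

Lemma B_key (R : realFieldType) (q : R) (hq : 0 < q) s : forall c d, (c + d = s)%N ->
  forall a b, q^+(a*d) * B q a b * B q c d <= B q (a + c) (b + d).
Proof.
elim: s => [|s IH] c d.
  move=> h a b; have [-> ->] : c = 0%N /\ d = 0%N by lia.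
  by rewrite !addn0 muln0 expr0 mul1r B_m0 // mulr1.
case: c => [|c] hs a b.
  by rewrite B_0r // mulr1 addn0 B_shiftn.
case: d hs => [|d] hs.
  by rewrite muln0 expr0 mul1r B_m0 // mulr1 addn0 B_mono.
rewrite !addnS !B_pascal //.
have h1 := IH c.+1 d ltac:(lia) a b.
have h2 := IH c d.+1 ltac:(lia) a b.
have -> : q ^+ (a * d.+1) * B q a b * (q ^+ c.+1 * B q c.+1 d + B q c d.+1)
   = q ^+ (a + c).+1 * (q ^+ (a * d) * B q a b * B q c.+1 d)
     + q ^+ (a * d.+1) * B q a b * B q c d.+1.
  by rewrite -addnS mulnS !exprD; ring.
rewrite addnS in h1.
apply: lerD; last by rewrite -addnS.
by rewrite ler_wpM2l // exprn_ge0 // ltW.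
Qed.

Definition M (R : realFieldType) (q : R) n (k : 'I_n -> nat) := qfact q (absv k) / qfactv q k.

Lemma qfactv_gt0 (R : realFieldType) (q : R) n (k : 'I_n -> nat) : 0 < q -> 0 < qfactv q k.
Proof. move=> hq; rewrite /qfactv; apply: prodr_gt0 => i _; exact: qfact_gt0. Qed.

Lemma M_gt0 (R : realFieldType) (q : R) n (k : 'I_n -> nat) : 0 < q -> 0 < M q k.
Proof. by move=> hq; rewrite /M divr_gt0 ?qfact_gt0 ?qfactv_gt0. Qed.

Lemma M_split (R : realFieldType) (q : R) n (k : 'I_n.+1 -> nat) : 0 < q ->
  M q k = M q (fun i => k (widen_ord (leqnSn n) i)) *
          B q (absv (fun i => k (widen_ord (leqnSn n) i))) (k ord_max).
Proof.
move=> hq; rewrite /M /B /absv /qfactv big_ord_recr /= (big_ord_recr n) /=.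
set a := (\sum_(i < n) _)%N.
have h1 := qfact_gt0 a hq; have h2 := qfact_gt0 (k ord_max) hq.
have h3 : 0 < \prod_(i < n) qfact q (k (widen_ord (leqnSn n) i)).
  by apply: prodr_gt0 => i _; exact: qfact_gt0.
field; by rewrite !lt0r_neq0.
Qed.

Lemma expo_split n (k l : 'I_n.+1 -> nat) :
  (\sum_(i < n.+1) \sum_(j < n.+1 | (i < j)%N) (k i * l j))%N =
  (\sum_(i < n) \sum_(j < n | (i < j)%N) (k (widen_ord (leqnSn n) i) * l (widen_ord (leqnSn n) j))
   + absv (fun i => k (widen_ord (leqnSn n) i)) * l ord_max)%N.
Proof.
rewrite big_ord_recr /=.
rewrite [X in (_ + X)%N]big1 ?addn0; last first.
  by move=> j; rewrite ltnNge -ltnS ltn_ord.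
rewrite /absv big_distrl /= -big_split /=.
apply: eq_bigr => i _.
rewrite big_mkcond big_ord_recr /= -big_mkcond /=.
by rewrite ltn_ord.
Qed.

Lemma main (R : realFieldType) (q : R) (hq : 0 < q) n : forall k l : 'I_n -> nat,
  M q k * M q l * q ^+ (\sum_(i < n) \sum_(j < n | (i < j)%N) (k i * l j))%N
  <= M q (fun i => k i + l i)%N.
Proof.
elim: n => [|n IH] k l.
  by rewrite /M /absv /qfactv !big_ord0 qfact0 divr1 !mulr1.
rewrite expo_split (M_split k hq) (M_split l hq) (M_split (fun i => k i + l i)%N hq) /=.
set k' := (fun i => k (widen_ord (leqnSn n) i)).
set l' := (fun i => l (widen_ord (leqnSn n) i)).
have -> : absv (fun i => k (widen_ord (leqnSn n) i) + l (widen_ord (leqnSn n) i))%N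
   = (absv k' + absv l')%N by rewrite /absv big_split.
have hI := IH k' l'.
have hK := B_key hq (erefl (absv l' + l ord_max)%N) (absv k') (k ord_max).
set E := (\sum_(i < n) _)%N.
rewrite exprD.
have -> : M q k' * B q (absv k') (k ord_max) * (M q l' * B q (absv l') (l ord_max)) *
   (q ^+ E * q ^+ (absv k' * l ord_max))
   = (M q k' * M q l' * q ^+ E) * (q ^+ (absv k' * l ord_max) * B q (absv k') (k ord_max) * B q (absv l') (l ord_max)) by ring.
apply: ler_pM => //.
- by apply: ltW; apply: mulr_gt0; [apply: mulr_gt0; exact: M_gt0|exact: exprn_gt0].
- by apply: ltW; apply: mulr_gt0; [apply: mulr_gt0; [exact: exprn_gt0|exact: B_gt0]|exact: B_gt0].
Qed.

Theorem lemma3p7 (R : realFieldType) (q : R) (hq : 0 < q) (n : nat)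
    (k l : 'I_n -> nat) :
  qfact q (absv k) / qfactv q k * (qfact q (absv l) / qfactv q l)
    * q ^+ (\sum_(i < n) \sum_(j < n | (i < j)%N) (k i * l j))%N
  <= qfact q (absv (fun i => k i + l i)%N) / qfactv q (fun i => k i + l i)%N.
Proof. exact: main. Qed.
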